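(* Let $G=(V,E)$ be a connected graph, $s\in V$, and $\mathcal{T}$ the layering tree of $G$ with respect to $s$. Let $i\ge \ell(\mathcal{T})+2$ and $k\le i-\ell(\mathcal{T})-2$. Then $\mathcal{T}_k$ is determined by $G_i$ together with the layers $L_0,\dots,L_{i-1}$: for every $j\le k-1$, two vertices $u,v\in L_j$ lie in the same part of $\mathcal{T}$ if and only if they are connected in $G_i[L_{\ge j}]=G[L_j\cup\dots\cup L_{i-1}]$, and two parts at layers $\le k-1$ are adjacent in $\mathcal{T}$ iff some edge of $G_i$ joins them. In particular $\mathcal{T}_k$ can be computed from $G_i$ without any distance queries.
   Context: For a connected graph $G$ and root $s\in V(G)$, the BFS layers are $L_i=\{v: d_G(s,v)=i\}$ for $i\ge 0$, with $L_{\le k}=L_0\cup\dots\cup L_k$, $L_{\ge k}=\bigcup_{j\ge k}L_j$, $L_{-1}=\emptyset$. For each $i\ge 0$, let $S_i^1,\dots,S_i^{s_i}$ be the connected components of $G\setminus L_{\le i-1}$ (i.e. of $G[L_{\ge i}]$), and let $P_i^j=S_i^j\cap L_i$; the nonempty sets $P_i^j$ are the parts at layer (depth) $i$, and the set $\mathcal{P}$ of all parts over all layers partitions $V(G)$. The layering tree $\mathcal{T}=(\mathcal{P},\mathcal{E})$ has the parts as vertices, with $(P,P')\in\mathcal{E}$ iff some $u\in P$, $u'\in P'$ are adjacent in $G$. Its length is $\ell(\mathcal{T})=\max_{P\in\mathcal{P}}\max_{u,v\in P} d_G(u,v)$ (distances measured in $G$). $G_i=G[L_{\le i-1}]$ is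 the subgraph induced by the first $i$ layers, and $\mathcal{T}_k$ is the subtree of $\mathcal{T}$ induced by the parts at layers $0,1,\dots,k-1$. *)

(* Defs.v *)
From mathcomp Require Import all_boot.
Set Implicit Arguments. Unset Strict Implicit. Unset Printing Implicit Defensive.

(* A finite simple graph is a symmetric irreflexive relation e on a finType T. *)
Section Layering.
Variables (T : finType) (e : rel T).

Definition walk_of_len (n : nat) (u v : T) : bool :=
  [exists p : n.-tuple T, path e u p && (last u p == v)].

(* graph distance: least n such that a walk of length n from u to v exists.
   (In a connected graph a shortest walk has fewer than #|T| edges, so the
   search range iota 0 #|T| is exhaustive; for unreachable v it returns #|T|.) *)
Definition gdist (u v : T) : nat :=
  find (fun n => walk_of_len n u v) (iota 0 #|T|).

Definition connected_graph : Prop := forall u v : T, connect e u v.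

Definition conn_in (A : {set T}) (u v : T) : bool :=
  [&& u \in A, v \in A &
      connect (fun x y => [&& x \in A, y \in A & e x y]) u v].

Variable s : T.

(* BFS layers L_i, L_{>= i}, L_{<= i-1} (vertex set of G_i), L_j u ... u L_{i-1} *)
Definition layer (i : nat) : {set T} := [set v | gdist s v == i].
Definition layer_ge (i : nat) : {set T} := [set v | i <= gdist s v].
Definition layer_lt (i : nat) : {set T} := [set v | gdist s v < i].
Definition layer_range (j i : nat) : {set T} := [set v | j <= gdist s v < i].

(* the part of the layering tree containing u: u lies in L_d (d = d(s,u)),
   and the part is S \cap L_d where S is the component of G[L_{>= d}] containing u *)
Definition part (u : T) : {set T} :=
  let d := gdist s u in [set v in layer d | conn_in (layer_ge d) u v].

Definition parts : {set {set T}} := [set part u | u : T].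

Definition part_depth (P : {set T}) : nat :=
  if [pick x in P] is Some x then gdist s x else 0.

Definition tree_adj (P P' : {set T}) : Prop :=
  exists u u', [/\ u \in P, u' \in P' & e u u'].

Definition tree_length : nat :=
  \max_(P in parts) \max_(u in P) \max_(v in P) gdist u v.

End Layering.

(* Main.v *)
Require Import Defs.
From mathcomp Require Import all_boot zify.
Set Implicit Arguments. Unset Strict Implicit. Unset Printing Implicit Defensive.

Section Aux.
Variables (T : finType) (e : rel T).
Hypothesis e_sym : symmetric e.
Hypothesis Gconn : connected_graph e.

Lemma walk_intro n u v (p : seq T) : size p = n -> path e u p -> last u p = v ->
  walk_of_len e n u v.
Proof.
move=> Hs Hp Hl; apply/existsP.
have Hs' : size p == n by apply/eqP.
exists (Tuple Hs') => /=; rewrite Hp Hl eqxx //.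
Qed.

Lemma walk_elim n u v : walk_of_len e n u v ->
  exists p : seq T, [/\ size p = n, path e u p & last u p = v].
Proof.
move/existsP=> [p /andP [Hp /eqP Hl]]; exists (val p); split => //.
exact: size_tuple.
Qed.

Lemma gdist_le n u v : walk_of_len e n u v -> gdist e u v <= n.
Proof.
move=> W; rewrite /gdist.
case: (ltnP n #|T|) => Hn.
  rewrite leqNgt; apply/negP => Hlt.
  have := before_find 0 Hlt; rewrite nth_iota // add0n W //.
apply: leq_trans (find_size _ _) _; rewrite size_iota //.
Qed.

Lemma gdist_walk u v : walk_of_len e (gdist e u v) u v.
Proof.
have [p Hp ->] := connectP (Gconn u v).
case: (shortenP Hp) => p' Hp' Hu _.
have Hsz : size p' < #|T|.
  have := card_uniqP Hu; rewrite /= => Hc.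
  have := max_card (mem (u :: p')); rewrite Hc /= //.
have Hh : has (fun n => walk_of_len e n u (last u p')) (iota 0 #|T|).
  apply/hasP; exists (size p'); first by rewrite mem_iota.
  exact: walk_intro Hp' erefl.
have := nth_find 0 Hh; rewrite nth_iota ?add0n //.
by move: Hh; rewrite has_find size_iota.
Qed.

Lemma walk_cat n m u v w : walk_of_len e n u v -> walk_of_len e m v w ->
  walk_of_len e (n + m) u w.
Proof.
move=> /walk_elim [p [Hs Hp Hl]] /walk_elim [q [Hs' Hq Hl']].
apply: (walk_intro (p := p ++ q)); first by rewrite size_cat Hs Hs'.
  by rewrite cat_path Hp Hl Hq.
by rewrite last_cat Hl.
Qed.

Lemma walk_rev n u v : walk_of_len e n u v -> walk_of_len e n v u.
Proof.
move=> /walk_elim [p [Hs Hp Hl]]; subst n v.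
elim: p u Hp => [|h p IH] u /=.
  move=> _; exact: (walk_intro (p := [::])).
move=> /andP [Hu Hp].
have := IH h Hp => /walk_elim [q [Hs Hq Hl]].
apply: (walk_intro (p := rcons q u)); first by rewrite size_rcons Hs.
  by rewrite rcons_path Hq Hl e_sym Hu.
by rewrite last_rcons.
Qed.

Lemma gdist_sym u v : gdist e u v = gdist e v u.
Proof.
apply/eqP; rewrite eqn_leq.
by rewrite !gdist_le // walk_rev // gdist_walk.
Qed.

Lemma gdist_tri u v w : gdist e u w <= gdist e u v + gdist e v w.
Proof. by apply: gdist_le; apply: walk_cat; apply: gdist_walk. Qed.

Lemma walk1 x y : e x y -> walk_of_len e 1 x y.
Proof. by move=> H; apply: (walk_intro (p := [:: y])) => //=; rewrite H. Qed.

Lemma gdist_edge s x y : e x y -> gdist e s y <= (gdist e s x).+1.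
Proof.
move=> H; apply: leq_trans (gdist_tri s x y) _.
by rewrite -addn1 leq_add2l gdist_le // walk1.
Qed.

Lemma path_pos x p z : path e x p -> z \in x :: p ->
  exists t1 t2, [/\ t1 + t2 = size p, walk_of_len e t1 x z &
                    walk_of_len e t2 z (last x p)].
Proof.
elim: p x => [|h p IH] x /=.
  move=> _; rewrite inE => /eqP ->; exists 0, 0; split => //;
  exact: (walk_intro (p := [::])).
move=> /andP [Hxh Hp]; rewrite inE => /orP [/eqP ->|Hz].
  exists 0, (size p).+1; split => //; first exact: (walk_intro (p := [::])).
  by apply: (walk_intro (p := h :: p)) => //=; rewrite Hxh.
have [t1 [t2 [Ht W1 W2]]] := IH h Hp Hz.
exists t1.+1, t2; split; first by rewrite addSn Ht.
  by rewrite -add1n; apply: walk_cat W1; apply: walk1.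
exact: W2.
Qed.

Lemma path_conn (A : {set T}) x p : path e x p -> {subset x :: p <= A} ->
  connect (fun a b => [&& a \in A, b \in A & e a b]) x (last x p).
Proof.
elim: p x => [|h p IH] x /=; first by move=> _ _; apply: connect0.
move=> /andP [Hxh Hp] Hsub.
apply: (connect_trans (y := h)).
  by apply: connect1; rewrite Hxh !Hsub // !inE eqxx ?orbT.
by apply: IH => // z Hz; apply: Hsub; rewrite inE Hz orbT.
Qed.

End Aux.

Section Main.
Variables (T : finType) (e : rel T) (s : T).
Hypothesis e_sym : symmetric e.
Hypothesis Gconn : connected_graph e.
Local Notation d := (gdist e s).
Definition rst (A : {set T}) := fun a b => [&& a \in A, b \in A & e a b].

Lemma rst_sym A : symmetric (rst A).
Proof. by move=> a b; rewrite /rst e_sym; case: (a \in A); case: (b \in A). Qed.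

Lemma conn_in_sym (A : {set T}) u v : conn_in e A u v -> conn_in e A v u.
Proof.
case/and3P => Hu Hv Hc; rewrite /conn_in Hu Hv /=.
have := sym_connect_sym (rst_sym A) u v; rewrite /rst => <-; exact: Hc.
Qed.

Lemma conn_in_trans (A : {set T}) u v w : conn_in e A u v -> conn_in e A v w -> conn_in e A u w.
Proof.
case/and3P => Hu _ H1; case/and3P => _ Hw H2; rewrite /conn_in Hu Hw /=.
exact: connect_trans H1 H2.
Qed.

Lemma conn_in_refl (A : {set T}) u : u \in A -> conn_in e A u u.
Proof. by move=> H; rewrite /conn_in H connect0. Qed.

Lemma conn_in_edge (A : {set T}) u v : u \in A -> v \in A -> e u v -> conn_in e A u v.
Proof. by move=> Hu Hv H; rewrite /conn_in Hu Hv connect1 // Hu Hv H. Qed.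

Lemma conn_in_sub (A B : {set T}) u v : A \subset B -> conn_in e A u v -> conn_in e B u v.
Proof.
move=> /subsetP HAB /and3P [Hu Hv Hc]; rewrite /conn_in !HAB //=.
apply: connect_sub Hc => a b /and3P [Ha Hb Hab].
by apply: connect1; rewrite !HAB.
Qed.

Lemma in_part x u : (u \in part e s x) =
  (d u == d x) && conn_in e (layer_ge e s (d x)) x u.
Proof. by rewrite /part !inE. Qed.

Lemma part_self x : x \in part e s x.
Proof. by rewrite in_part eqxx conn_in_refl // inE. Qed.

Lemma part_in_parts x : part e s x \in parts e s.
Proof. by apply/imsetP; exists x. Qed.

Lemma part_depth_part x : part_depth e s (part e s x) = d x.
Proof.
rewrite /part_depth; case: pickP => [z|H].
  by rewrite in_part => /andP [/eqP].
by have := H x; rewrite part_self.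
Qed.

Lemma pred_ex w n : d w = n.+1 -> exists w', e w' w /\ d w' = n.
Proof.
move=> Hw; have := gdist_walk Gconn s w; rewrite Hw => /walk_elim [p [Hs Hp Hl]].
move: Hs Hp Hl; case/lastP: p => [|q x] //.
rewrite size_rcons rcons_path last_rcons => [[Hs]] /andP [Hq He] Hx; subst x.
exists (last s q); split => //.
apply/eqP; rewrite eqn_leq; apply/andP; split.
  by apply: gdist_le; apply: (walk_intro (p := q)).
by have := gdist_edge Gconn s He; rewrite Hw.
Qed.

Lemma anchor m n w : d w = m + n ->
  exists a, d a = m /\ conn_in e (layer_ge e s m) a w.
Proof.
elim: n w => [|n IH] w Hw.
  by exists w; split; [rewrite Hw addn0 | apply: conn_in_refl; rewrite inE Hw addn0].
have [w' [He Hw']] := pred_ex (n := m + n) (etrans Hw (addnS m n)).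
have [a [Ha Ca]] := IH w' Hw'.
exists a; split => //; apply: conn_in_trans Ca _.
by apply: conn_in_edge => //; rewrite inE ?Hw' ?Hw; lia.
Qed.

Lemma tree_bound a b : d a = d b -> conn_in e (layer_ge e s (d a)) a b ->
  gdist e a b <= tree_length e s.
Proof.
move=> Hab C; rewrite /tree_length.
have Hb : b \in part e s a by rewrite in_part Hab eqxx -Hab C.
apply: leq_trans (leq_bigmax_cond _ (part_in_parts a)).
apply: leq_trans (leq_bigmax_cond _ (part_self a)).
exact: (leq_bigmax_cond _ Hb).
Qed.

End Main.

Section Hard.
Variables (T : finType) (e : rel T) (s : T).
Hypothesis e_sym : symmetric e.
Hypothesis Gconn : connected_graph e.
Local Notation d := (gdist e s).

Lemma edge_bd x y : e x y -> d y <= (d x).+1 /\ d x <= (d y).+1.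
Proof.
move=> H; split; first exact: gdist_edge.
by apply: gdist_edge Gconn _ _ _ _; rewrite e_sym.
Qed.

Lemma hard j i : j + tree_length e s + 1 <= i -> forall u v, d u = j -> d v = j ->
  conn_in e (layer_ge e s j) u v -> conn_in e (layer_range e s j i) u v.
Proof.
move=> Hi u v Hu Hv Huv.
set l := tree_length e s in Hi.
have [m [Hm1 Hm2]] : exists m, 2 * j + l <= 2 * m /\ 2 * m <= 2 * j + l + 1.
  exists (j + l./2 + odd l); have := odd_double_half l; rewrite -muln2; lia.
pose g w := if d w <= m then w
            else odflt w [pick a | (d a == m) && conn_in e (layer_ge e s m) a w].
have g_id w : d w <= m -> g w = w by move=> H; rewrite /g H.
have g_spec w : m <= d w -> d (g w) = m /\ conn_in e (layer_ge e s m) (g w) w.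
  move=> H; rewrite /g; case: leqP => H'.
    have Hdw : d w = m by lia.
    by split => //; apply: conn_in_refl; rewrite inE Hdw.
  case: pickP => [a /andP [/eqP ? ?] //|H0].
  have Hdw : d w = m + (d w - m) by lia.
  have [a [Ha Ca]] := anchor Gconn Hdw.
  by have := H0 a; rewrite Ha eqxx Ca.
have step (x y : T) : rst e (layer_ge e s j) x y ->
    connect (rst e (layer_range e s j i)) (g x) (g y).
  case/and3P => Hx Hy Hxy; rewrite !inE in Hx Hy.
  have [Eb1 Eb2] := edge_bd Hxy.
  case: (leqP m (d x)) => Hmx; case: (leqP m (d y)) => Hmy; last first.
  - rewrite !g_id; try lia.
    by apply: connect1; rewrite /rst !inE Hxy; apply/and3P; split => //;
       apply/andP; split; lia.
  - rewrite !g_id; try lia.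
    by apply: connect1; rewrite /rst !inE Hxy; apply/and3P; split => //;
       apply/andP; split; lia.
  - rewrite !g_id; try lia.
    by apply: connect1; rewrite /rst !inE Hxy; apply/and3P; split => //;
       apply/andP; split; lia.
  have [ga ca] := g_spec x Hmx.
  have [gb cb] := g_spec y Hmy.
  have cab : conn_in e (layer_ge e s m) (g x) (g y).
    apply: conn_in_trans ca _; apply: conn_in_trans (conn_in_sym e_sym cb).
    by apply: conn_in_edge => //; rewrite inE.
  have Hle : gdist e (g x) (g y) <= l.
    by apply: tree_bound; rewrite ?ga ?gb.
  have := gdist_walk Gconn (g x) (g y) => /walk_elim [p [Hs Hp Hl]].
  rewrite -Hl; apply: (path_conn Hp) => z Hz.
  have [t1 [t2 [Ht W1 W2]]] := path_pos Hp Hz.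
  rewrite Hl in W2.
  have B1 := gdist_le W1; have B2 := gdist_le W2.
  have T1 := gdist_tri Gconn s (g x) z.
  have T2 := gdist_tri Gconn s (g y) z.
  have T3 := gdist_tri Gconn s z (g x).
  have T4 := gdist_tri Gconn s z (g y).
  have S1 := gdist_sym e_sym Gconn (g y) z.
  have S2 := gdist_sym e_sym Gconn z (g x).
  rewrite inE; apply/andP; split; lia.
have gu : g u = u by apply: g_id; lia.
have gv : g v = v by apply: g_id; lia.
case/and3P: Huv => Hu' Hv' /connectP [p Hp Hl].
suff : connect (rst e (layer_range e s j i)) (g u) (g (last u p)).
  rewrite -Hl gu gv => C; rewrite /conn_in !inE Hu Hv leqnn /=.
  by rewrite C andbT; apply/andP; split; lia.
elim: p u {Hu Hl gu Hu'} Hp => [|h p IH] x /=; first by rewrite connect0.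
case/andP => Hxh Hp; apply: connect_trans (IH _ Hp).
exact: step.
Qed.

End Hard.

Theorem mainTheorem4 (T : finType) (e : rel T) (s : T)
  (e_sym : symmetric e) (e_irr : irreflexive e)
  (Gconn : connected_graph e) (i k : nat) :
  tree_length e s + 2 <= i ->
  k <= i - (tree_length e s + 2) ->
  (forall j, j < k -> forall u v, u \in layer e s j -> v \in layer e s j ->
     (exists2 P, P \in parts e s & (u \in P) && (v \in P)) <->
     conn_in e (layer_range e s j i) u v)
  /\
  (forall P P', P \in parts e s -> P' \in parts e s ->
     part_depth e s P < k -> part_depth e s P' < k ->
     tree_adj e P P' <->
     exists u u', [/\ u \in P, u' \in P', u \in layer_lt e s i, u' \in layer_lt e s i & e u u']).
Proof.
move=> Hi Hk; split.
  move=> j Hj u v; rewrite !inE => /eqP Hu /eqP Hv; split.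
    case=> P /imsetP [x _ ->] /andP [Hux Hvx].
    rewrite !in_part in Hux Hvx.
    case/andP: Hux => /eqP Hdx Cu; case/andP: Hvx => _ Cv.
    apply: hard => //; first lia.
    have C := conn_in_trans (conn_in_sym e_sym Cu) Cv.
    by rewrite -Hu Hdx.
  move=> C; exists (part e s u); first exact: part_in_parts.
  rewrite part_self in_part Hu Hv eqxx /=.
  apply: conn_in_sub C; apply/subsetP => z; rewrite !inE => /andP [].
  by [].
move=> P P' /imsetP [x _ ->] /imsetP [y _ ->]; rewrite !part_depth_part => Hx Hy.
split.
  case=> a [b [Ha Hb Hab]]; exists a, b; split => //; rewrite inE.
    by move: Ha; rewrite in_part => /andP [/eqP -> _]; lia.
  by move: Hb; rewrite in_part => /andP [/eqP -> _]; lia.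
by case=> a [b [Ha Hb _ _ Hab]]; exists a, b.
Qed.
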